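(* Let $Q$ be a quantale, $M$ a $Q$-module and $\mathcal{F},\mathcal{G}\in\operatorname{mF}(Q)$. If both $\mathcal{F}$ and $\mathcal{F}+\mathcal{G}$ are localizable over $M$, then $\mathcal{G}$ is localizable over the $Q$-module $M_\mathcal{F}$, and the map $M_{\mathcal{F}+\mathcal{G}}\to (M_\mathcal{F})_\mathcal{G}$, $\overline{x}\mapsto\overline{\overline{x}}$, is a well-defined isomorphism of $Q$-modules.
   Context: A quantale is a poset $Q$ in which every nonempty subset $S$ has a join $\sum S$ (binary joins written $a+b$; no bottom element is required), with a top element $1$ and a commutative, associative multiplication with unit $1$ satisfying $a\cdot\sum_{i\in I}b_i=\sum_{i\in I}ab_i$ for every nonempty $I$. A $Q$-module is a poset $M$ with all nonempty joins and an action $Q\times M\to M$ which is associative, has $1$ acting as the identity, and distributes over nonempty joins in each variable. A Q-premodule is the same except $M$ is only required to have binary joins and distributivity over finite nonempty joins. A multiplicative filter (m-filter) of $Q$ is a subset $\mathcal{F}\subseteq Q$ with $1\in\mathcal{F}$, upward closed and closed under multiplication; $\operatorname{mF}(Q)$ is the set of m-filters; $\mathcal{F}+\mathcal{G}$ is the smallest m-filter containing $\mathcal{F}\cup\mathcal{G}$. Localization: for $a,b\in M$ write $a\preceq^1_\mathcal{F} b$ if there are families $(a_i)_{i\in I}$ in $M$ and $(s_i)_{i\in I}$ in $\mathcal{F}$ with $a\le\sum_i a_i$ and $s_ia_i\le b$ for all $i$; for $n\ge1$, $a\preceq^n_\mathcal{F} b$ means there are $c_1,\dots,c_{n-1}\in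 M$ with $a\preceq^1_\mathcal{F}c_1\preceq^1_\mathcal{F}\cdots\preceq^1_\mathcal{F}c_{n-1}\preceq^1_\mathcal{F}b$; $a\preceq_\mathcal{F}b$ means $a\preceq^n_\mathcal{F}b$ for some $n$. This is a preorder; $M_\mathcal{F}$ is the quotient by $a\sim b\iff a\preceq_\mathcal{F}b\preceq_\mathcal{F}a$, with class $\overline a$ and order $\overline a\le\overline b\iff a\preceq_\mathcal{F}b$; it is a $Q$-premodule with $\overline a+\overline b=\overline{a+b}$, $q\overline a=\overline{qa}$. $\mathcal{F}$ is localizable over $M$ if for each $b\in M$ there is $n_b\in\mathbb{N}$ such that $a\preceq_\mathcal{F}b$ implies $a\preceq^{n_b}_\mathcal{F}b$ for all $a\in M$; then $M_\mathcal{F}$ is a $Q$-module with $\sum_i\overline{a_i}=\overline{\sum_ia_i}$ and $q\overline a=\overline{qa}$. *)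

(* Defs.v *)
From Stdlib Require Import IndefiniteDescription.

Set Implicit Arguments.
Unset Strict Implicit.

Record QStruct := mkQStruct {
  Qc   :> Type;
  qle  : Qc -> Qc -> Prop;
  qsup : (Qc -> Prop) -> Qc;
  qmul : Qc -> Qc -> Qc;
  qone : Qc
}.
Arguments qle : clear implicits.
Arguments qsup : clear implicits.
Arguments qmul : clear implicits.
Arguments qone : clear implicits.

Definition nonempty {T : Type} (S : T -> Prop) : Prop := exists x, S x.
Definition image {T U : Type} (f : T -> U) (S : T -> Prop) : U -> Prop :=
  fun y => exists x, S x /\ y = f x.

Definition is_partial_order {T : Type} (le : T -> T -> Prop) : Prop :=
  (forall x, le x x) /\
  (forall x y, le x y -> le y x -> x = y) /\
  (forall x y z, le x y -> le y z -> le x z).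

Definition is_lub {T : Type} (le : T -> T -> Prop) (S : T -> Prop) (s : T) : Prop :=
  (forall x, S x -> le x s) /\ (forall u, (forall x, S x -> le x u) -> le s u).

Definition is_quantale (Q : QStruct) : Prop :=
  is_partial_order (qle Q) /\
  (forall S : Q -> Prop, nonempty S -> is_lub (qle Q) S (qsup Q S)) /\
  (forall a : Q, qle Q a (qone Q)) /\
  (forall a b : Q, qmul Q a b = qmul Q b a) /\
  (forall a b c : Q, qmul Q a (qmul Q b c) = qmul Q (qmul Q a b) c) /\
  (forall a : Q, qmul Q (qone Q) a = a) /\
  (forall (a : Q) (S : Q -> Prop), nonempty S ->
     qmul Q a (qsup Q S) = qsup Q (image (qmul Q a) S)).

Record MStruct (Q : QStruct) := mkMStruct {
  Mc   :> Type;
  mle  : Mc -> Mc -> Prop;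
  msup : (Mc -> Prop) -> Mc;
  act  : Q -> Mc -> Mc
}.
Arguments mle {Q} m _ _ : rename.
Arguments msup {Q} m _ : rename.
Arguments act {Q} m _ _ : rename.

Definition is_module (Q : QStruct) (M : MStruct Q) : Prop :=
  is_partial_order (mle M) /\
  (forall S : M -> Prop, nonempty S -> is_lub (mle M) S (msup M S)) /\
  (forall (p q : Q) (m : M), act M p (act M q m) = act M (qmul Q p q) m) /\
  (forall m : M, act M (qone Q) m = m) /\
  (forall (S : Q -> Prop) (m : M), nonempty S ->
     act M (qsup Q S) m = msup M (image (fun s => act M s m) S)) /\
  (forall (q : Q) (T : M -> Prop), nonempty T ->
     act M q (msup M T) = msup M (image (act M q) T)).

Definition mfilter (Q : QStruct) (F : Q -> Prop) : Prop :=
  F (qone Q) /\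
  (forall a b : Q, F a -> qle Q a b -> F b) /\
  (forall a b : Q, F a -> F b -> F (qmul Q a b)).
Arguments mfilter : clear implicits.

Definition mfilter_sum (Q : QStruct) (F G : Q -> Prop) : Q -> Prop :=
  fun q => forall H : Q -> Prop, mfilter Q H ->
    (forall x, F x -> H x) -> (forall x, G x -> H x) -> H q.

Section Localization.
Variables (Q : QStruct) (F : Q -> Prop) (M : MStruct Q).

Definition prec1 (a b : M) : Prop :=
  exists (I : Type) (ai : I -> M) (si : I -> Q),
    inhabited I /\
    mle M a (msup M (fun x => exists i, x = ai i)) /\
    (forall i, F (si i) /\ mle M (act M (si i) (ai i)) b).

(** a ⪯^n_F b  (chains of n steps of ⪯^1_F, n >= 1; n = 0 is never used) *)
Fixpoint precn (n : nat) (a b : M) : Prop :=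
  match n with
  | O => False
  | S O => prec1 a b
  | S m => exists c, prec1 a c /\ precn m c b
  end.

Definition prec (a b : M) : Prop := exists n, precn n a b.

Definition loc_equiv (a b : M) : Prop := prec a b /\ prec b a.

Definition localizable : Prop :=
  forall b : M, exists nb : nat, forall a : M, prec a b -> precn nb a b.

(** The quotient M_F: equivalence classes (as predicates). *)
Definition LocC : Type := { C : M -> Prop | exists a, C = loc_equiv a }.

Definition cls (a : M) : LocC := exist _ (loc_equiv a) (ex_intro _ a eq_refl).

Definition rep (C : LocC) : M :=
  proj1_sig (constructive_indefinite_description _ (proj2_sig C)).

Definition loc_le (C D : LocC) : Prop := prec (rep C) (rep D).

Definition loc_sup (S : LocC -> Prop) : LocC :=
  cls (msup M (fun x => exists C, S C /\ x = rep C)).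

Definition loc_act (q : Q) (C : LocC) : LocC := cls (act M q (rep C)).

Definition loc : MStruct Q := mkMStruct loc_le loc_sup loc_act.

Definition lcls (a : M) : loc := cls a.

End Localization.

Definition is_module_iso (Q : QStruct) (M N : MStruct Q) (f : M -> N) : Prop :=
  (exists g : N -> M, (forall x, g (f x) = x) /\ (forall y, f (g y) = y)) /\
  (forall x y : M, mle M x y <-> mle N (f x) (f y)) /\
  (forall S : M -> Prop, nonempty S -> f (msup M S) = msup N (image f S)) /\
  (forall (q : Q) (x : M), f (act M q x) = act N q (f x)).
Arguments mfilter_sum : clear implicits.

(* Main.v *)
Require Import Defs.
From Stdlib Require Import IndefiniteDescription ProofIrrelevance FunctionalExtensionality PropExtensionality.

Section Chain.
Variables (Q : QStruct) (N : MStruct Q).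

Lemma precn_cons (K : Q -> Prop) n a c b :
  @prec1 Q K N a c -> @precn Q K N n c b -> @precn Q K N (S n) a b.
Proof. intros H1 H2. destruct n as [|n]; [destruct H2|]. simpl. exists c. split; assumption. Qed.

Lemma precn_inv (K : Q -> Prop) n a b : @precn Q K N (S n) a b ->
  (n = 0 /\ @prec1 Q K N a b) \/ exists c, @prec1 Q K N a c /\ @precn Q K N n c b.
Proof. intro H. destruct n as [|n]; [left; split; [reflexivity|exact H] | right; exact H]. Qed.

Lemma precn_app (K : Q -> Prop) n m a b c :
  @precn Q K N n a b -> @precn Q K N m b c -> @precn Q K N (n + m) a c.
Proof.
  revert a. induction n as [|n IH]; intros a H1 H2; [destruct H1|].
  apply precn_inv in H1. destruct H1 as [[-> H1] | [d [H1 H3]]].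
  - simpl. apply precn_cons with b; assumption.
  - simpl. apply precn_cons with d; auto.
Qed.

Lemma prec_trans (K : Q -> Prop) a b c : @prec Q K N a b -> @prec Q K N b c -> @prec Q K N a c.
Proof. intros [n H1] [m H2]. exists (n + m). eapply precn_app; eauto. Qed.

Lemma prec1_mono (K K' : Q -> Prop) a b : (forall q, K q -> K' q) ->
  @prec1 Q K N a b -> @prec1 Q K' N a b.
Proof.
  intros HKK (I & ai & si & Hi & Ha & Hs). exists I, ai, si.
  split; [exact Hi| split; [exact Ha| intro i; destruct (Hs i); split; auto]].
Qed.

Lemma precn_mono (K K' : Q -> Prop) n a b : (forall q, K q -> K' q) ->
  @precn Q K N n a b -> @precn Q K' N n a b.
Proof.
  intros HKK. revert a. induction n as [|n IH]; intros a H; [destruct H|].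
  apply precn_inv in H. destruct H as [[-> H] | [d [H1 H3]]].
  - eapply prec1_mono; eauto.
  - apply precn_cons with d; [eapply prec1_mono; eauto| auto].
Qed.

Lemma prec_mono (K K' : Q -> Prop) a b : (forall q, K q -> K' q) ->
  @prec Q K N a b -> @prec Q K' N a b.
Proof. intros HKK [n H]. exists n. eapply precn_mono; eauto. Qed.

Lemma rep_spec (K : Q -> Prop) (C : LocC K N) : proj1_sig C = @loc_equiv Q K N (@rep Q K N C).
Proof. unfold rep. destruct (constructive_indefinite_description _ _) as [a Ha]. simpl. exact Ha. Qed.

Lemma cls_rep (K : Q -> Prop) (C : LocC K N) : @cls Q K N (@rep Q K N C) = C.
Proof.
  destruct C as [P HP]. pose proof (rep_spec K (exist _ P HP)) as Hs. simpl in Hs.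
  unfold cls. apply subset_eq_compat. symmetry. exact Hs.
Qed.

Lemma rep_cls (K : Q -> Prop) a : @prec Q K N a a -> @loc_equiv Q K N (@rep Q K N (@cls Q K N a)) a.
Proof.
  intro Hr. pose proof (rep_spec K (@cls Q K N a)) as Hs. simpl in Hs.
  assert (E := f_equal (fun P : N -> Prop => P a) Hs). simpl in E.
  rewrite <- E. split; exact Hr.
Qed.

Lemma cls_eq (K : Q -> Prop) a b : @loc_equiv Q K N a b -> @cls Q K N a = @cls Q K N b.
Proof.
  intros [Hab Hba]. unfold cls. apply subset_eq_compat.
  apply functional_extensionality. intro c. apply propositional_extensionality.
  unfold loc_equiv. split; intros [H1 H2]; split.
  - eapply prec_trans; eauto.
  - eapply prec_trans; eauto.
  - eapply prec_trans; eauto.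
  - eapply prec_trans; eauto.
Qed.

End Chain.
Section Mod.
Variables (Q : QStruct) (M : MStruct Q).
Hypothesis HQ : is_quantale Q.
Hypothesis HM : is_module M.

Notation le := (mle M).
Notation sup := (msup M).

Lemma le_refl x : le x x. Proof. destruct HM as [[r _] _]; apply r. Qed.
Lemma le_antisym x y : le x y -> le y x -> x = y. Proof. destruct HM as [[_ [a _]] _]; apply a. Qed.
Lemma le_trans x y z : le x y -> le y z -> le x z. Proof. destruct HM as [[_ [_ t]] _]; apply t. Qed.
Lemma sup_ub (S : M -> Prop) x : S x -> le x (sup S).
Proof. intro Hx. destruct HM as [_ [L _]]. apply (proj1 (L S (ex_intro _ x Hx))); auto. Qed.
Lemma sup_least (S : M -> Prop) u : nonempty S -> (forall x, S x -> le x u) -> le (sup S) u.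
Proof. intros Hn H. destruct HM as [_ [L _]]. apply (proj2 (L S Hn)); auto. Qed.
Lemma act_assoc p q m : act M p (act M q m) = act M (qmul Q p q) m.
Proof. destruct HM as [_ [_ [a _]]]; apply a. Qed.
Lemma act_one m : act M (qone Q) m = m. Proof. destruct HM as [_ [_ [_ [a _]]]]; apply a. Qed.
Lemma act_qsup (S : Q -> Prop) m : nonempty S -> act M (qsup Q S) m = sup (image (fun s => act M s m) S).
Proof. destruct HM as [_ [_ [_ [_ [a _]]]]]; apply a. Qed.
Lemma act_sup q (T : M -> Prop) : nonempty T -> act M q (sup T) = sup (image (act M q) T).
Proof. destruct HM as [_ [_ [_ [_ [_ a]]]]]; apply a. Qed.

Lemma qle_refl x : qle Q x x. Proof. destruct HQ as [[r _] _]; apply r. Qed.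
Lemma qle_antisym x y : qle Q x y -> qle Q y x -> x = y. Proof. destruct HQ as [[_ [a _]] _]; apply a. Qed.
Lemma qle_trans x y z : qle Q x y -> qle Q y z -> qle Q x z. Proof. destruct HQ as [[_ [_ t]] _]; apply t. Qed.
Lemma qsup_ub (S : Q -> Prop) x : S x -> qle Q x (qsup Q S).
Proof. intro Hx. destruct HQ as [_ [L _]]. apply (proj1 (L S (ex_intro _ x Hx))); auto. Qed.
Lemma qsup_least (S : Q -> Prop) u : nonempty S -> (forall x, S x -> qle Q x u) -> qle Q (qsup Q S) u.
Proof. intros Hn H. destruct HQ as [_ [L _]]. apply (proj2 (L S Hn)); auto. Qed.
Lemma qmul_comm a b : qmul Q a b = qmul Q b a. Proof. destruct HQ as [_ [_ [_ [cc _]]]]; apply cc. Qed.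
Lemma qmul_assoc a b c : qmul Q a (qmul Q b c) = qmul Q (qmul Q a b) c.
Proof. destruct HQ as [_ [_ [_ [_ [cc _]]]]]; apply cc. Qed.
Lemma qmul_one a : qmul Q (qone Q) a = a. Proof. destruct HQ as [_ [_ [_ [_ [_ [c _]]]]]]; apply c. Qed.
Lemma qmul_qsup a (S : Q -> Prop) : nonempty S -> qmul Q a (qsup Q S) = qsup Q (image (qmul Q a) S).
Proof. destruct HQ as [_ [_ [_ [_ [_ [_ c]]]]]]; apply c. Qed.

Lemma sup_pair x y : le x y -> sup (fun z => z = x \/ z = y) = y.
Proof.
  intro H. apply le_antisym.
  - apply sup_least. exists x; auto. intros z [-> | ->]; [exact H | apply le_refl].
  - apply sup_ub. auto.
Qed.
Lemma qsup_pair x y : qle Q x y -> qsup Q (fun z => z = x \/ z = y) = y.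
Proof.
  intro H. apply qle_antisym.
  - apply qsup_least. exists x; auto. intros z [-> | ->]; [exact H | apply qle_refl].
  - apply qsup_ub. auto.
Qed.
Lemma act_mono_m q x y : le x y -> le (act M q x) (act M q y).
Proof.
  intro H. rewrite <- (sup_pair _ _ H). rewrite act_sup by (exists x; auto).
  apply sup_ub. exists x; auto.
Qed.
Lemma act_mono_q f h a : qle Q f h -> le (act M f a) (act M h a).
Proof.
  intro H. rewrite <- (qsup_pair _ _ H). rewrite act_qsup by (exists f; auto).
  apply sup_ub. exists f; auto.
Qed.
Lemma qmul_mono_r c a b : qle Q a b -> qle Q (qmul Q c a) (qmul Q c b).
Proof.
  intro H. rewrite <- (qsup_pair _ _ H). rewrite qmul_qsup by (exists a; auto).
  apply qsup_ub. exists a; auto.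
Qed.
Lemma qmul_mono a b c d : qle Q a b -> qle Q c d -> qle Q (qmul Q a c) (qmul Q b d).
Proof.
  intros H1 H2. apply qle_trans with (qmul Q a d); [apply qmul_mono_r; exact H2|].
  rewrite (qmul_comm a d), (qmul_comm b d). apply qmul_mono_r; exact H1.
Qed.
Lemma act_comm p q x : act M p (act M q x) = act M q (act M p x).
Proof. rewrite !act_assoc, qmul_comm. reflexivity. Qed.

Lemma prec1_single (K : Q -> Prop) k a b : K k -> le (act M k a) b -> @prec1 Q K M a b.
Proof.
  intros Hk H. exists unit, (fun _ => a), (fun _ => k).
  split; [constructor; exact tt|]. split.
  - apply sup_ub. exists tt; reflexivity.
  - intros _. split; assumption.
Qed.

Lemma le_prec (K : Q -> Prop) a b : K (qone Q) -> le a b -> @prec Q K M a b.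
Proof. intros HK H. exists 1. apply prec1_single with (qone Q); [exact HK|]. rewrite act_one; exact H. Qed.

Lemma prec_refl (K : Q -> Prop) a : K (qone Q) -> @prec Q K M a a.
Proof. intro HK. apply le_prec; [exact HK| apply le_refl]. Qed.

Lemma prec1_scale (K : Q -> Prop) k x : K k -> @prec1 Q K M x (act M k x).
Proof. intro Hk. apply prec1_single with k; [exact Hk| apply le_refl]. Qed.

Lemma prec1_act (K : Q -> Prop) q a b : @prec1 Q K M a b -> @prec1 Q K M (act M q a) (act M q b).
Proof.
  intros (I & ai & si & Hi & Ha & Hs).
  exists I, (fun i => act M q (ai i)), si. split; [exact Hi|]. split.
  - eapply le_trans. apply act_mono_m. exact Ha.
    destruct Hi as [i0]. rewrite act_sup by (exists (ai i0); exists i0; reflexivity).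
    apply sup_least.
    + exists (act M q (ai i0)), (ai i0). split; [exists i0; reflexivity| reflexivity].
    + intros y (x & (i & ->) & ->). apply sup_ub. exists i; reflexivity.
  - intro i. destruct (Hs i) as [H1 H2]. split; [exact H1|]. rewrite act_comm. apply act_mono_m. exact H2.
Qed.

Lemma precn_act (K : Q -> Prop) q n a b : @precn Q K M n a b -> @precn Q K M n (act M q a) (act M q b).
Proof.
  revert a. induction n as [|n IH]; intros a H; [destruct H|].
  apply precn_inv in H. destruct H as [[-> H] | [d [H1 H3]]].
  - apply prec1_act; exact H.
  - apply precn_cons with (act M q d); [apply prec1_act; exact H1| auto].
Qed.

Lemma prec_act (K : Q -> Prop) q a b : @prec Q K M a b -> @prec Q K M (act M q a) (act M q b).
Proof. intros [n H]. exists n. apply precn_act; exact H. Qed.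

Lemma prec1_le_r (K : Q -> Prop) a c d : @prec1 Q K M a c -> le c d -> @prec1 Q K M a d.
Proof.
  intros (I & ai & si & Hi & Ha & Hs) Hcd. exists I, ai, si. split; [exact Hi|]. split; [exact Ha|].
  intro i. destruct (Hs i) as [H1 H2]. split; [exact H1| eapply le_trans; eauto].
Qed.

Lemma sup_prec1 (K : Q -> Prop) (X : M -> Prop) d : nonempty X ->
  (forall x, X x -> @prec1 Q K M x d) -> @prec1 Q K M (sup X) d.
Proof.
  intros [x0 Hx0] H.
  pose (J := {p : M * Q | K (snd p) /\ le (act M (snd p) (fst p)) d}).
  exists J, (fun p : J => fst (proj1_sig p)), (fun p : J => snd (proj1_sig p)).
  split.
  - destruct (H x0 Hx0) as (I & ai & si & [i0] & _ & Hs). destruct (Hs i0) as [h1 h2].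
    constructor. exists (ai i0, si i0). split; assumption.
  - split.
    + apply sup_least. exists x0; exact Hx0. intros x Hx.
      destruct (H x Hx) as (I & ai & si & [i0] & Ha & Hs).
      eapply le_trans; [exact Ha|]. apply sup_least.
      * exists (ai i0); exists i0; reflexivity.
      * intros y [i ->]. apply sup_ub. destruct (Hs i) as [h1 h2].
        exists (exist _ (ai i, si i) (conj h1 h2)). reflexivity.
    + intros [[a s] [h1 h2]]. simpl. split; assumption.
Qed.

Lemma sup_precn (K : Q -> Prop) b n : forall X : M -> Prop, nonempty X ->
  (forall x, X x -> @precn Q K M n x b) -> @precn Q K M n (sup X) b.
Proof.
  induction n as [|n IH]; intros X [x0 Hx0] H; [destruct (H x0 Hx0)|].
  destruct n as [|n].
  - apply sup_prec1; [exists x0; exact Hx0| exact H].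
  - pose (C := fun c => @precn Q K M (S n) c b /\ exists x, X x /\ @prec1 Q K M x c).
    apply precn_cons with (sup C).
    + apply sup_prec1; [exists x0; exact Hx0|]. intros x Hx.
      destruct (H x Hx) as [c [H1 H2]]. apply prec1_le_r with c; [exact H1|].
      apply sup_ub. split; [exact H2| exists x; split; assumption].
    + apply IH.
      * destruct (H x0 Hx0) as [c [H1 H2]]. exists c. split; [exact H2| exists x0; split; assumption].
      * intros c [Hc _]. exact Hc.
Qed.

Lemma sup_prec_loc (K : Q -> Prop) b (X : M -> Prop) : localizable K M -> nonempty X ->
  (forall x, X x -> @prec Q K M x b) -> @prec Q K M (sup X) b.
Proof.
  intros L Hn H. destruct (L b) as [n Hnb]. exists n. apply sup_precn; [exact Hn|].
  intros x Hx. apply Hnb, H, Hx.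
Qed.

Lemma sup_prec_cmp (K : Q -> Prop) (A B : M -> Prop) : localizable K M -> K (qone Q) ->
  nonempty A -> (forall a, A a -> exists b, B b /\ @prec Q K M a b) -> @prec Q K M (sup A) (sup B).
Proof.
  intros L HK Hn H. apply sup_prec_loc; [exact L| exact Hn|].
  intros a Ha. destruct (H a Ha) as [b [Hb Hab]]. eapply prec_trans; [exact Hab|].
  apply le_prec; [exact HK| apply sup_ub; exact Hb].
Qed.

Lemma sumF (F G : Q -> Prop) q : F q -> mfilter_sum Q F G q.
Proof. intros Hq H _ HF _. apply HF; exact Hq. Qed.
Lemma sumG (F G : Q -> Prop) q : G q -> mfilter_sum Q F G q.
Proof. intros Hq H _ _ HG. apply HG; exact Hq. Qed.

Lemma sum_decomp (F G : Q -> Prop) h : mfilter Q F -> mfilter Q G -> mfilter_sum Q F G h ->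
  exists f g, F f /\ G g /\ qle Q (qmul Q f g) h.
Proof.
  intros [F1 [Fu Fm]] [G1 [Gu Gm]] Hh.
  apply (Hh (fun q => exists f g, F f /\ G g /\ qle Q (qmul Q f g) q)).
  - split; [|split].
    + exists (qone Q), (qone Q). split; [exact F1|]. split; [exact G1|]. rewrite qmul_one. apply qle_refl.
    + intros a b (f & g & Hf & Hg & Hle) Hab. exists f, g. split; [exact Hf|]. split; [exact Hg|].
      eapply qle_trans; eauto.
    + intros a b (f1 & g1 & Hf1 & Hg1 & Hle1) (f2 & g2 & Hf2 & Hg2 & Hle2).
      exists (qmul Q f1 f2), (qmul Q g1 g2). split; [apply Fm; assumption|]. split; [apply Gm; assumption|].
      replace (qmul Q (qmul Q f1 f2) (qmul Q g1 g2)) with (qmul Q (qmul Q f1 g1) (qmul Q f2 g2)).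
      * apply qmul_mono; assumption.
      * rewrite <- (qmul_assoc f1 g1 (qmul Q f2 g2)), (qmul_assoc g1 f2 g2), (qmul_comm g1 f2),
          <- (qmul_assoc f2 g1 g2), (qmul_assoc f1 f2 (qmul Q g1 g2)). reflexivity.
  - intros f Hf. exists f, (qone Q). split; [exact Hf|]. split; [exact G1|].
    rewrite qmul_comm, qmul_one. apply qle_refl.
  - intros g Hg. exists (qone Q), g. split; [exact F1|]. split; [exact Hg|].
    rewrite qmul_one. apply qle_refl.
Qed.

Section Loc.
Variables (F G : Q -> Prop).
Hypothesis HF : mfilter Q F.
Hypothesis HG : mfilter Q G.
Hypothesis LF : localizable F M.
Hypothesis LH : localizable (mfilter_sum Q F G) M.

Notation H := (mfilter_sum Q F G).
Notation LFM := (loc F M).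

Lemma F1 : F (qone Q). Proof. destruct HF as [h _]; exact h. Qed.
Lemma G1 : G (qone Q). Proof. destruct HG as [h _]; exact h. Qed.
Lemma H1 : H (qone Q). Proof. apply sumF, F1. Qed.
Lemma FH q : F q -> H q. Proof. apply sumF. Qed.
Lemma GH q : G q -> H q. Proof. apply sumG. Qed.

Lemma repF (x : M) : @loc_equiv Q F M (@rep Q F M (@cls Q F M x)) x.
Proof. apply rep_cls, prec_refl, F1. Qed.
Lemma repH (x : M) : @loc_equiv Q H M (@rep Q H M (@cls Q H M x)) x.
Proof. apply rep_cls, prec_refl, H1. Qed.
Lemma repF1 (x : M) : @prec Q F M (@rep Q F M (@cls Q F M x)) x. Proof. apply repF. Qed.
Lemma repF2 (x : M) : @prec Q F M x (@rep Q F M (@cls Q F M x)). Proof. apply repF. Qed.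

Lemma claim1 (C D : LocC F M) : @prec1 Q G LFM C D -> @prec Q H M (rep C) (rep D).
Proof.
  intros (I & ai & si & [i0] & Ha & Hs).
  change (@prec Q F M (rep C) (rep (@cls Q F M (msup M (fun x => exists C0, (exists i, C0 = ai i) /\ x = rep C0))))) in Ha.
  apply prec_trans with (msup M (fun x => exists C0, (exists i, C0 = ai i) /\ x = rep C0)).
  - eapply prec_mono; [exact FH|]. eapply prec_trans; [exact Ha| apply repF1].
  - apply sup_prec_loc; [exact LH| exists (rep (ai i0)); exists (ai i0); split; [exists i0; reflexivity| reflexivity]|].
    intros x (E & (i & ->) & ->). destruct (Hs i) as [HGs Hle].
    change (@prec Q F M (rep (@cls Q F M (act M (si i) (rep (ai i))))) (rep D)) in Hle.
    apply prec_trans with (act M (si i) (rep (ai i))).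
    + exists 1. apply prec1_scale, GH, HGs.
    + eapply prec_mono; [exact FH|]. eapply prec_trans; [apply repF2| exact Hle].
Qed.

Lemma claim1n n (C D : LocC F M) : @precn Q G LFM n C D -> @prec Q H M (rep C) (rep D).
Proof.
  revert C. induction n as [|n IH]; intros C Hn; [destruct Hn|].
  apply precn_inv in Hn. destruct Hn as [[-> Hn] | [E [H1' H2']]].
  - apply claim1; exact Hn.
  - eapply prec_trans; [apply claim1; exact H1'| apply IH; exact H2'].
Qed.

Lemma claim2 (x y : M) : @prec1 Q H M x y -> @prec1 Q G LFM (@cls Q F M x) (@cls Q F M y).
Proof.
  intros (I & ai & si & Hi & Ha & Hs).
  assert (Hd : forall i, exists g, G g /\ exists f, F f /\ qle Q (qmul Q f g) (si i)).
  { intro i. destruct (sum_decomp F G (si i) HF HG (proj1 (Hs i))) as (f & g & Hf & Hg & Hle).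
    exists g. split; [exact Hg|]. exists f. split; assumption. }
  destruct (functional_choice _ Hd) as [g Hg].
  exists I, (fun i => @cls Q F M (ai i)), g. split; [exact Hi|]. split.
  - change (@prec Q F M (rep (@cls Q F M x)) (rep (@cls Q F M (msup M (fun z => exists E, (exists i, E = @cls Q F M (ai i)) /\ z = rep E))))).
    eapply prec_trans; [apply repF1|].
    eapply prec_trans; [apply le_prec; [apply F1| exact Ha]|].
    eapply prec_trans; [| apply repF2].
    apply sup_prec_cmp; [exact LF| apply F1| destruct Hi as [i0]; exists (ai i0); exists i0; reflexivity|].
    intros a [i ->]. exists (rep (@cls Q F M (ai i))). split.
    + exists (@cls Q F M (ai i)). split; [exists i; reflexivity| reflexivity].
    + apply repF2.
  - intro i. destruct (Hg i) as [HGg [f [HFf Hle]]]. split; [exact HGg|].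
    change (@prec Q F M (rep (@cls Q F M (act M (g i) (rep (@cls Q F M (ai i)))))) (rep (@cls Q F M y))).
    eapply prec_trans; [apply repF1|].
    eapply prec_trans; [apply prec_act, repF1|].
    eapply prec_trans; [| apply repF2].
    exists 1. apply prec1_single with f; [exact HFf|].
    rewrite act_assoc. eapply le_trans; [apply act_mono_q; exact Hle| apply (proj2 (Hs i))].
Qed.

Lemma claim2n n (x y : M) : @precn Q H M n x y -> @precn Q G LFM n (@cls Q F M x) (@cls Q F M y).
Proof.
  revert x. induction n as [|n IH]; intros x Hn; [destruct Hn|].
  apply precn_inv in Hn. destruct Hn as [[-> Hn] | [E [H1' H2']]].
  - apply claim2; exact Hn.
  - apply precn_cons with (@cls Q F M E); [apply claim2; exact H1'| apply IH; exact H2'].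
Qed.

Lemma claim (C D : LocC F M) : @prec Q G LFM C D <-> @prec Q H M (rep C) (rep D).
Proof.
  split.
  - intros [n Hn]. eapply claim1n; eauto.
  - intros [n Hn]. exists n. pose proof (claim2n _ _ _ Hn) as H'. rewrite !cls_rep in H'. exact H'.
Qed.

Lemma locG : localizable G LFM.
Proof.
  intro D. destruct (LH (rep D)) as [m Hm]. exists m. intros C HC.
  apply claim in HC. apply Hm in HC. pose proof (claim2n _ _ _ HC) as H'. rewrite !cls_rep in H'. exact H'.
Qed.


Definition phi (C : loc H M) : loc G LFM := @cls Q G LFM (@cls Q F M (@rep Q H M C)).

Lemma eH_sym a b : @loc_equiv Q H M a b -> @loc_equiv Q H M b a.
Proof. intros [h1 h2]; split; assumption. Qed.
Lemma eH_trans a b c : @loc_equiv Q H M a b -> @loc_equiv Q H M b c -> @loc_equiv Q H M a c.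
Proof. intros [h1 h2] [h3 h4]; split; eapply prec_trans; eauto. Qed.
Lemma eF_H a b : @loc_equiv Q F M a b -> @loc_equiv Q H M a b.
Proof. intros [h1 h2]; split; (eapply prec_mono; [exact FH| assumption]). Qed.

Lemma clsGF_eq (a b : M) : @loc_equiv Q H M a b ->
  @cls Q G LFM (@cls Q F M a) = @cls Q G LFM (@cls Q F M b).
Proof.
  intro e.
  assert (E : @loc_equiv Q H M (@rep Q F M (@cls Q F M a)) (@rep Q F M (@cls Q F M b))).
  { apply eH_trans with b; [apply eH_trans with a; [apply eF_H, repF| exact e]| apply eH_sym, eF_H, repF]. }
  apply cls_eq. split; apply claim; [exact (proj1 E)| exact (proj2 E)].
Qed.

Lemma precG_refl (C : LocC F M) : @prec Q G LFM C C.
Proof. apply claim, prec_refl, H1. Qed.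

Lemma repG (E : LocC F M) : @loc_equiv Q G LFM (@rep Q G LFM (@cls Q G LFM E)) E.
Proof. apply rep_cls, precG_refl. Qed.

Lemma key (C : loc H M) : @loc_equiv Q H M (@rep Q F M (@rep Q G LFM (phi C))) (@rep Q H M C).
Proof.
  destruct (repG (@cls Q F M (@rep Q H M C))) as [e1 e2].
  apply claim in e1. apply claim in e2.
  apply eH_trans with (@rep Q F M (@cls Q F M (@rep Q H M C))); [split; assumption|].
  apply eF_H, repF.
Qed.

Lemma phi_cls (x : M) : phi (@cls Q H M x) = @cls Q G LFM (@cls Q F M x).
Proof. unfold phi. apply clsGF_eq, repH. Qed.

Lemma phi_iso : @is_module_iso Q (loc H M) (loc G LFM) phi.
Proof.
  split; [|split; [|split]].
  - exists (fun E : loc G LFM => @cls Q H M (@rep Q F M (@rep Q G LFM E))). split.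
    + intro C. rewrite <- (cls_rep _ _ _ C) at 2. apply cls_eq. apply key.
    + intro E. rewrite phi_cls. rewrite !cls_rep. reflexivity.
  - intros C D. change (@prec Q H M (rep C) (rep D) <-> @prec Q G LFM (rep (phi C)) (rep (phi D))).
    rewrite claim. destruct (key C) as [c1 c2]. destruct (key D) as [d1 d2].
    split; intro h.
    + eapply prec_trans; [exact c1|]. eapply prec_trans; [exact h| exact d2].
    + eapply prec_trans; [exact c2|]. eapply prec_trans; [exact h| exact d1].
  - intros S [C0 HC0].
    change (phi (@cls Q H M (msup M (fun x => exists C, S C /\ x = rep C))) =
      @cls Q G LFM (@cls Q F M (msup M (fun x => exists D, (exists E, image phi S E /\ D = rep E) /\ x = rep D)))).
    rewrite phi_cls. apply clsGF_eq. split; apply sup_prec_cmp; try exact LH; try exact H1.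
    + exists (rep C0). exists C0. split; [exact HC0| reflexivity].
    + intros a (C & HC & ->). exists (@rep Q F M (@rep Q G LFM (phi C))). split.
      * exists (@rep Q G LFM (phi C)). split; [| reflexivity]. exists (phi C). split; [| reflexivity].
        exists C. split; [exact HC| reflexivity].
      * apply (key C).
    + exists (@rep Q F M (@rep Q G LFM (phi C0))). exists (@rep Q G LFM (phi C0)). split; [| reflexivity].
      exists (phi C0). split; [| reflexivity]. exists C0. split; [exact HC0| reflexivity].
    + intros b (D & (E & (C & HC & ->) & ->) & ->). exists (rep C). split.
      * exists C. split; [exact HC| reflexivity].
      * apply (key C).
  - intros q C.
    change (phi (@cls Q H M (act M q (rep C))) =
      @cls Q G LFM (@cls Q F M (act M q (@rep Q F M (@rep Q G LFM (phi C)))))).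
    rewrite phi_cls. apply clsGF_eq. destruct (key C) as [c1 c2]. split; apply prec_act; assumption.
Qed.

End Loc.
End Mod.

Theorem mainTheorem2 (Q : QStruct) (M : MStruct Q) (F G : Q -> Prop) :
  is_quantale Q -> is_module M -> mfilter Q F -> mfilter Q G ->
  localizable F M -> localizable (mfilter_sum Q F G) M ->
  localizable G (loc F M) /\
  exists phi : loc (mfilter_sum Q F G) M -> loc G (loc F M),
    (forall x : M, phi (lcls (mfilter_sum Q F G) x) = lcls G (lcls F x)) /\
    is_module_iso phi.
Proof.
  intros HQ HM HF HG LF LH. split.
  - eapply locG; eauto.
  - exists (@phi Q M F G). split.
    + intro x. unfold lcls. eapply phi_cls; eauto.
    + eapply phi_iso; eauto.
Qed.
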